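(* Let $R$ be a unital ring with involution, let $a\in R$ be core invertible and $b\in R$ with $a\overset{\circledast}{\leq} b$. Then the following conditions are equivalent: (1) $a\overset{\#}{\leq} b$; (2) $ab=ba$; (3) $a^{2}\overset{\circledast}{\leq} b^{2}$; (4) $a^{k}\overset{\circledast}{\leq} b^{k}$ for every integer $k\geq 2$. (Here $a^k$ is core invertible for all $k\ge 1$, with $(a^k)^{\circledast}=(a^{\circledast})^k$.)
   Context: $R$ is a ring with identity and an involution $x\mapsto x^{*}$. An element $a\in R$ is core invertible if there exists $x\in R$ with $axa=a$, $xR=aR$ and $Rx=Ra^{*}$; such $x$ is unique, called the core inverse of $a$ and denoted $a^{\circledast}$. Every core invertible $a$ is group invertible, with group inverse $a^{\#}$ the unique $x$ satisfying $axa=a$, $xax=x$, $ax=xa$. For $c$ core invertible and $d\in R$, $c\overset{\circledast}{\leq} d$ means $c^{\circledast}c=c^{\circledast}d$ and $cc^{\circledast}=dc^{\circledast}$. For group invertible $a$, the sharp partial order $a\overset{\#}{\leq} b$ means $a^{\#}a=a^{\#}b$ and $aa^{\#}=ba^{\#}$. *)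

(* Defs.v *)
From HB Require Import structures.
From mathcomp Require Import all_boot all_order all_algebra.
Set Implicit Arguments. Unset Strict Implicit. Unset Printing Implicit Defensive.
Import GRing.Theory.
Local Open Scope ring_scope.

Definition is_involution (R : pzRingType) (star : R -> R) : Prop :=
  (forall x, star (star x) = x) /\
  (forall x y, star (x + y) = star x + star y) /\
  (forall x y, star (x * y) = star y * star x).

Definition rideal_eq (R : pzRingType) (x a : R) : Prop :=
  (exists u, x = a * u) /\ (exists v, a = x * v).
Definition lideal_eq (R : pzRingType) (x y : R) : Prop :=
  (exists u, x = u * y) /\ (exists v, y = v * x).

Definition is_core_inverse (R : pzRingType) (star : R -> R) (a x : R) : Prop :=
  a * x * a = a /\ rideal_eq x a /\ lideal_eq x (star a).

Definition core_invertible (R : pzRingType) (star : R -> R) (a : R) : Prop :=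
  exists x, is_core_inverse star a x.

Definition is_group_inverse (R : pzRingType) (a x : R) : Prop :=
  a * x * a = a /\ x * a * x = x /\ a * x = x * a.

(* core partial order c <=(core) d, with c^(core) the (unique) core inverse *)
Definition core_le (R : pzRingType) (star : R -> R) (c d : R) : Prop :=
  exists x, is_core_inverse star c x /\ x * c = x * d /\ c * x = d * x.

(* sharp partial order a <=(#) b, with a^# the (unique) group inverse *)
Definition sharp_le (R : pzRingType) (a b : R) : Prop :=
  exists x, is_group_inverse a x /\ x * a = x * b /\ a * x = b * x.

(* Main.v *)
Require Import Defs.
From HB Require Import structures.
From mathcomp Require Import all_boot all_order all_algebra.
Import GRing.Theory.
Local Open Scope ring_scope.
Set Implicit Arguments. Unset Strict Implicit.

Section Core.
Variables (R : pzRingType) (star : R -> R).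
Hypothesis hstar : is_involution star.

Let starK : forall x, star (star x) = x. Proof. by case: hstar. Qed.
Let starM : forall x y, star (x * y) = star y * star x.
Proof. by case: hstar => _ []. Qed.

Definition core5 (a x : R) :=
  [/\ a * x * a = a, x * a * x = x, star (a * x) = a * x,
      x * (a * a) = a & a * (x * x) = x].

Lemma ci_core5 a c : is_core_inverse star a c -> core5 a c.
Proof.
case=> aca [[[u cu] [v av]] [[w cw] [z az]]].
have hs : c = c * star (a * c).
  have e : star a = star a * star (a * c) by rewrite -starM aca.
  by rewrite {1}cw {1}e mulrA -cw.
have herm : star (a * c) = a * c.
  have e : a * c = a * c * star (a * c) by rewrite -mulrA -hs.
  by rewrite {1}e starM starK -e.
have cac : c * a * c = c by rewrite -mulrA -herm -hs.
split; rewrite ?aca ?cac ?herm //.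
- by rewrite {2}av !mulrA cac -av.
- by rewrite {2}cu !mulrA aca -cu.
Qed.

Lemma core5_ci a c : core5 a c -> is_core_inverse star a c.
Proof.
case=> aca cac herm caa acc; split=> //; split.
- by split; [exists (c * c); rewrite acc | exists (a * a); rewrite caa].
split.
- by exists (c * star c); rewrite -mulrA -starM herm mulrA cac.
- by exists (star a * a); rewrite -mulrA -herm -starM aca.
Qed.

Lemma core5_uniq a x y : core5 a x -> core5 a y -> x = y.
Proof.
case=> axa xax hx xaa axx; case=> aya yay hy yaa ayy.
have e1 : x = x * a * y.
  have e : star a = star a * star (a * y) by rewrite -starM aya.
  transitivity (x * star (a * x)); first by rewrite hx mulrA xax.
  by rewrite starM e (mulrA (star x)) -starM hx hy !mulrA xax.
by rewrite e1 -{1}ayy -mulrA (mulrA a a) mulrA xaa ayy.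
Qed.

Lemma ac_pow a c n : core5 a c -> a ^+ n.+1 * c ^+ n.+1 = a * c.
Proof.
case=> _ _ _ _ acc; elim: n => [|n IH]; first by rewrite !expr1.
rewrite exprSr [c ^+ n.+2]exprS [c ^+ n.+1]exprS -mulrA (mulrA a c).
by rewrite (mulrA (a * c) c) -(mulrA a c c) acc -exprS IH.
Qed.

Lemma ca_pow a c n : core5 a c -> c ^+ n.+1 * a ^+ n.+1 = c * a.
Proof.
case=> _ _ _ caa _; elim: n => [|n IH]; first by rewrite !expr1.
rewrite exprSr [a ^+ n.+2]exprS [a ^+ n.+1]exprS -mulrA (mulrA c a).
by rewrite (mulrA (c * a) a) -(mulrA c a a) caa -exprS IH.
Qed.

Lemma core5_pow a c n : core5 a c -> core5 (a ^+ n.+1) (c ^+ n.+1).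
Proof.
move=> h; have [aca cac herm caa acc] := h.
have e1 := ac_pow n h; have e2 := ca_pow n h.
split.
- by rewrite e1 exprS mulrA aca.
- by rewrite e2 exprS !mulrA cac.
- by rewrite e1 herm.
- by rewrite mulrA e2 exprS mulrA -(mulrA c a a) caa.
- by rewrite mulrA e1 exprS mulrA -(mulrA a c c) acc.
Qed.

End Core.

Theorem proposition3p4 (R : pzRingType) (star : R -> R)
  (hstar : is_involution star) (a b : R)
  (ha : core_invertible star a) (hab : core_le star a b) :
  [<-> sharp_le a b;
       a * b = b * a;
       core_le star (a ^+ 2) (b ^+ 2);
       forall k : nat, (2 <= k)%N -> core_le star (a ^+ k) (b ^+ k)].
Proof.
case: hab => c [ci [cacb acbc]].
have h5 := ci_core5 hstar ci; have [aca cac herm caa acc] := h5.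
have baaa : b * a = a * a.
  by rewrite -{1}caa mulrA -acbc mulrA aca.
have comm_sharp : a * b = b * a -> sharp_le a b.
  move=> ab; exists (c * c * a); split; [split; [|split] | split].
  - by rewrite -!mulrA caa mulrA aca.
  - by rewrite -!mulrA (mulrA a a) (mulrA c (a*a)) caa !mulrA cac.
  - by rewrite !mulrA -(mulrA a c c) acc -!mulrA caa.
  - by rewrite -!mulrA ab caa (mulrA c b) -cacb -mulrA caa.
  - by rewrite !mulrA -acbc.
have comm_corek : a * b = b * a -> forall n, core_le star (a ^+ n.+1) (b ^+ n.+1).
  move=> ab n; exists (c ^+ n.+1); split; first by have := core5_ci hstar (core5_pow n h5).
  have cb : forall m, c * b ^+ m = c * a ^+ m.
    elim=> [|m IH]; first by [].
    by rewrite exprSr mulrA IH -mulrA -(commrX m (esym ab)) mulrA -cacb -mulrA -exprS.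
  have bc : forall m, b ^+ m * c = a ^+ m * c.
    elim=> [|m IH]; first by [].
    by rewrite exprS -mulrA IH mulrA (commrX m (esym ab)) -mulrA -acbc mulrA -exprSr.
  split.
  - by rewrite [c ^+ n.+1]exprSr -!mulrA cb.
  - by rewrite [c ^+ n.+1]exprS !mulrA bc.
have core2_comm : core_le star (a ^+ 2) (b ^+ 2) -> a * b = b * a.
  case=> x [cx [e1 _]].
  have hx := ci_core5 hstar cx.
  have := core5_uniq hstar hx (core5_pow 1 h5) => xe.
  have := ca_pow 1 h5; rewrite -xe e1 xe expr2 [b ^+ 2]expr2 => e.
  rewrite -mulrA (mulrA c b b) -cacb !mulrA in e.
  have e' : a = c * a * b.
    transitivity (a * (c * a)); first by rewrite mulrA aca.
    by rewrite -[in LHS]e !mulrA -(mulrA a c c) acc.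
  by rewrite baaa; symmetry; rewrite {2}e' !mulrA aca.
tfae.
- case=> y [[aya [yay ay]] [yab ayb]].
  have e1 : a = a * y * b.
    transitivity (a * (y * a)); first by rewrite mulrA aya.
    by rewrite yab mulrA.
  have e2 : a = b * y * a by rewrite -ayb aya.
  transitivity (a * a).
    by symmetry; rewrite {2}e1 !mulrA -(mulrA a a y) ay mulrA aya.
  by rewrite {1}e2 -!mulrA (mulrA y a a) -ay aya.
- by move=> ab; exact: (comm_corek ab 1).
- by move=> h [|[|k]] // _; exact: comm_corek (core2_comm h) k.+1.
- by move=> h; apply: comm_sharp; apply: core2_comm; apply: h.
Qed.
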